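(* There exists a pair of unbiased weighing matrices of order $13$ and weight $9$.
   Context: A weighing matrix of order $n$ and weight $k$ is an $n\times n$ matrix $W$ with entries in $\{1,-1,0\}$ such that $WW^T=kI_n$. Two weighing matrices $W_1,W_2$ of order $n$ and weight $k$ are unbiased if $\frac{1}{\sqrt{k}}W_1W_2^T$ is also a weighing matrix of order $n$ and weight $k$. *)

(* Defs.v *)
From mathcomp Require Import all_boot all_order all_algebra all_field.
Set Implicit Arguments. Unset Strict Implicit. Unset Printing Implicit Defensive.
Import GRing.Theory Num.Theory.
Local Open Scope ring_scope.

Definition weighing_matrix (n k : nat) (W : 'M[int]_n) : Prop :=
  (forall i j, W i j \in [:: 1; -1; 0]) /\ W *m W^T = (k%:R)%:M.

Definition unbiased (n k : nat) (W1 W2 : 'M[int]_n) : Prop :=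
  weighing_matrix k W1 /\ weighing_matrix k W2 /\
  exists M : 'M[int]_n, weighing_matrix k M /\
    map_mx (fun z : int => (z%:~R : algC)) M =
    (sqrtC (k%:R : algC))^-1 *: (map_mx (fun z : int => (z%:~R : algC)) (W1 *m W2^T)).

(* Main.v *)
Require Import Defs.
From mathcomp Require Import all_boot all_order all_algebra all_field.
Set Implicit Arguments. Unset Strict Implicit. Unset Printing Implicit Defensive.
Import GRing.Theory Num.Theory.
Local Open Scope ring_scope.

Definition va : seq int := [:: 0; 0; 1; 0; 1; 1; 1; -1; -1; 0; 1; -1; 1].
Definition vb : seq int := [:: 0; 0; 1; 1; 0; 1; 0; 1; -1; 1; 1; -1; -1].
Definition vm : seq int := [:: 1; 1; -1; 1; 1; 1; 0; -1; 0; -1; 1; 0; 0].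

Definition fa (i j : nat) : int := nth 0 va ((j + 13 - i) %% 13)%N.
Definition fb (i j : nat) : int := nth 0 vb ((j + 13 - i) %% 13)%N.
Definition fm (i j : nat) : int := nth 0 vm ((i + 13 - j) %% 13)%N.

Definition mkM (f : nat -> nat -> int) : 'M[int]_13 := \matrix_(i, j) f i j.

Lemma sum13 (F : nat -> int) :
  \sum_(k < 13) F k = foldr (fun k acc => F k + acc) 0 (iota 0 13).
Proof. by rewrite -(big_mkord xpredT F) /index_iota subn0 unlock. Qed.

Definition prodf (f g : nat -> nat -> int) i j :=
  foldr (fun k acc => f i k * g j k + acc) 0 (iota 0 13).

Lemma mulE f g (i j : 'I_13) : (mkM f *m (mkM g)^T) i j = prodf f g i j.
Proof.
rewrite mxE (eq_bigr (fun k : 'I_13 => f i k * g j k)); last first.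
  by move=> k _; rewrite !mxE.
by rewrite (sum13 (fun k => f i k * g j k)).
Qed.

Definition allij (P : nat -> nat -> bool) :=
  all (fun i => all (fun j => P i j) (iota 0 13)) (iota 0 13).

Lemma allijP P : allij P -> forall i j : 'I_13, P i j.
Proof.
move=> /allP H i j.
have Hi : (nat_of_ord i \in iota 0 13) by rewrite mem_iota /= ltn_ord.
have Hj : (nat_of_ord j \in iota 0 13) by rewrite mem_iota /= ltn_ord.
by move: (H _ Hi) => /allP; apply.
Qed.

Lemma wm f : allij (fun i j => f i j \in [:: 1; -1; 0]) ->
  allij (fun i j => prodf f f i j == 9 *+ (i == j)) ->
  weighing_matrix 9 (mkM f).
Proof.
move=> H1 H2; split.
  by move=> i j; rewrite mxE; apply: (allijP H1).
apply/matrixP => i j; rewrite mulE mxE.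
by apply/eqP; apply: (allijP H2).
Qed.

Lemma wa : weighing_matrix 9 (mkM fa).
Proof. by apply: wm; vm_compute. Qed.
Lemma wb : weighing_matrix 9 (mkM fb).
Proof. by apply: wm; vm_compute. Qed.
Lemma wmm : weighing_matrix 9 (mkM fm).
Proof. by apply: wm; vm_compute. Qed.

Lemma prodM (i j : 'I_13) : (mkM fa *m (mkM fb)^T) i j = 3 * fm i j.
Proof.
rewrite mulE; apply/eqP; move: i j.
by apply: (@allijP (fun i j => prodf fa fb i j == 3 * fm i j)); vm_compute.
Qed.

Lemma sqrt9 : sqrtC (9%:R : algC) = 3.
Proof.
have -> : (9%:R : algC) = 3 ^+ 2 by rewrite -natrX.
by rewrite sqrCK // ler0n.
Qed.

Theorem proposition6p2 :
  exists W1 W2 : 'M[int]_13, unbiased 9 W1 W2.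
Proof.
exists (mkM fa), (mkM fb); split; first exact: wa.
split; first exact: wb.
exists (mkM fm); split; first exact: wmm.
rewrite sqrt9; apply/matrixP => i j; rewrite [RHS]mxE [in RHS]mxE prodM [LHS]mxE !mxE intrM /=.
rewrite mulrA mulVf ?mul1r //; last by rewrite pnatr_eq0.
Qed.
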